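(* Let $I$ be an open arc in $\partial\mathbb{D}$ and $\lambda\in I$. Let $v$ be a non-negative bounded function on $\partial\mathbb{D}$ which is continuous on $I$, continuously differentiable on $I\setminus\{\lambda\}$, and satisfies $v(\lambda)=0$. Then there exists an analytic function $b$ on $\mathbb{D}$ which extends continuously to $\overline{\mathbb{D}}$ and satisfies $b(\lambda)=0$ and $|b(e^{i\theta})|\ge v(e^{i\theta})$ for all $e^{i\theta}\in\partial\mathbb{D}$. *)

(* Defs.v *)
From Stdlib Require Import Reals.
Open Scope R_scope.

Definition Cpx : Type := (R * R)%type.
Definition Cadd (z w : Cpx) : Cpx := (fst z + fst w, snd z + snd w).
Definition Csub (z w : Cpx) : Cpx := (fst z - fst w, snd z - snd w).
Definition Cmul (z w : Cpx) : Cpx :=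
  (fst z * fst w - snd z * snd w, fst z * snd w + snd z * fst w).
Definition C0 : Cpx := (0, 0).
Definition Cnorm (z : Cpx) : R := sqrt (fst z * fst z + snd z * snd z).
Definition expi (t : R) : Cpx := (cos t, sin t).

Definition C_differentiable_at (f : Cpx -> Cpx) (z : Cpx) : Prop :=
  exists l : Cpx, forall eps : R, 0 < eps -> exists delta : R, 0 < delta /\
    forall h : Cpx, 0 < Cnorm h < delta ->
      Cnorm (Csub (Csub (f (Cadd z h)) (f z)) (Cmul l h)) <= eps * Cnorm h.

Definition analytic_on_disk (f : Cpx -> Cpx) : Prop :=
  forall z : Cpx, Cnorm z < 1 -> C_differentiable_at f z.

Definition continuous_on_closed_disk (f : Cpx -> Cpx) : Prop :=
  forall z : Cpx, Cnorm z <= 1 -> forall eps : R, 0 < eps ->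
    exists delta : R, 0 < delta /\
      forall w : Cpx, Cnorm w <= 1 -> Cnorm (Csub w z) < delta ->
        Cnorm (Csub (f w) (f z)) < eps.

(* Main.v *)
From Coquelicot Require Import Coquelicot.
From Stdlib Require Import Reals Lra Psatz ZArith ClassicalEpsilon.
Require Import Defs.
Open Scope R_scope.


Lemma Cmod_le_sq (x y : Complex.C) :
  fst x * fst x + snd x * snd x <= fst y * fst y + snd y * snd y -> Cmod x <= Cmod y.
Proof. intros H. unfold Cmod. apply sqrt_le_1_alt. simpl. lra. Qed.

Lemma Cmod_sq (x : Complex.C) : Cmod x * Cmod x = fst x * fst x + snd x * snd x.
Proof. unfold Cmod. rewrite sqrt_sqrt. simpl; ring. simpl. nra. Qed.

Lemma Re_le_Cmod (x : Complex.C) : fst x <= Cmod x.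
Proof. pose proof (re_le_Cmod x). unfold Re in H. pose proof (Rle_abs (fst x)). lra. Qed.

Lemma Cmod_pos_Re (x : Complex.C) : 0 < fst x -> x <> RtoC 0.
Proof. intros H E. rewrite E in H. simpl in H. lra. Qed.

Lemma Cmod_le_abs (x : Complex.C) : Cmod x <= Rabs (fst x) + Rabs (snd x).
Proof.
  unfold Cmod. rewrite <- (sqrt_Rsqr (Rabs (fst x) + Rabs (snd x))).
  apply sqrt_le_1_alt. unfold Rsqr. simpl.
  pose proof (Rabs_pos (fst x)). pose proof (Rabs_pos (snd x)).
  replace (fst x * (fst x * 1)) with (Rabs (fst x) * Rabs (fst x)).
  replace (snd x * (snd x * 1)) with (Rabs (snd x) * Rabs (snd x)). nra.
  rewrite <- Rabs_mult, Rabs_right; nra. rewrite <- Rabs_mult, Rabs_right; nra.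
  pose proof (Rabs_pos (fst x)). pose proof (Rabs_pos (snd x)). lra.
Qed.

Definition U (L z : Complex.C) : Complex.C := Cminus (RtoC 1) (Cmult L z).
Definition Aof (L : Complex.C) (e : R) (z : Complex.C) := Cplus (U L z) (RtoC e).
Definition G (L : Complex.C) (e : R) (z : Complex.C) : Complex.C := Cdiv (U L z) (Aof L e z).

Lemma G_fst L e z : Aof L e z <> RtoC 0 -> fst (G L e z) =
  (fst (U L z) * (fst (U L z) + e) + snd (U L z) * snd (U L z)) /
  ((fst (U L z) + e) * (fst (U L z) + e) + snd (U L z) * snd (U L z)).
Proof.
  intros H. unfold G, Aof in *. destruct (U L z) as [a b]. simpl.
  assert ((a+e)*(a+e)+b*b <> 0).
  { intro E. apply H. destruct (Rplus_sqr_eq_0 (a+e) b) as [E1 E2]. unfold Rsqr; lra.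
    unfold Cplus, RtoC; simpl. f_equal; lra. }
  field. replace ((a + e) * (a + e) + (b + 0) * (b + 0)) with ((a+e)*(a+e)+b*b) by ring. auto.
Qed.

Lemma Cmod_RtoC_pos e : 0 <= e -> Cmod (RtoC e) = e.
Proof. intros H. unfold Cmod, RtoC; cbn [fst snd]. replace (e ^ 2 + 0 ^ 2) with (e*e) by ring. apply sqrt_square; auto. Qed.

Lemma U_re L z : Cmod L = 1 -> 1 - Cmod z <= fst (U L z).
Proof.
  intros HL. pose proof (Re_le_Cmod (Cmult L z)). rewrite Cmod_mult, HL in H.
  change (fst (U L z)) with (1 - fst (Cmult L z)). lra.
Qed.

Lemma A_re L e z : fst (Aof L e z) = fst (U L z) + e.
Proof. unfold Aof; simpl; ring. Qed.

Lemma A_nz L e z : 0 < fst (U L z) + e -> Aof L e z <> RtoC 0.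
Proof. intros H. apply Cmod_pos_Re. rewrite A_re. auto. Qed.

Lemma A_mod L e z : fst (U L z) + e <= Cmod (Aof L e z).
Proof. rewrite <- A_re. apply Re_le_Cmod. Qed.

Lemma G_bound L e z : 0 <= fst (U L z) -> 0 < e -> Cmod (G L e z) <= 1.
Proof.
  intros HU He. unfold G. rewrite Cmod_div by (apply A_nz; lra).
  assert (Cmod (U L z) <= Cmod (Aof L e z)).
  { apply Cmod_le_sq. unfold Aof. destruct (U L z) as [a b]. simpl in *. nra. }
  assert (0 < Cmod (Aof L e z)) by (pose proof (A_mod L e z); lra).
  apply (Rmult_le_reg_r (Cmod (Aof L e z))); auto. unfold Rdiv.
  rewrite Rmult_assoc, Rinv_l; lra.
Qed.

Lemma G_re_nonneg L e z : 0 <= fst (U L z) -> 0 < e -> 0 <= fst (G L e z).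
Proof.
  intros HU He. rewrite G_fst by (apply A_nz; lra).
  destruct (U L z) as [a b]; simpl in *.
  apply Rdiv_le_0_compat; nra.
Qed.

Lemma G_re_big L e z : 0 <= fst (U L z) -> 0 < e -> e <= Cmod (U L z) -> / 4 <= fst (G L e z).
Proof.
  intros HU He HC. rewrite G_fst by (apply A_nz; lra).
  pose proof (Cmod_sq (U L z)). pose proof (Cmod_ge_0 (U L z)).
  destruct (U L z) as [a b]; simpl in *.
  assert (e * e <= a*a+b*b) by nra.
  apply (Rmult_le_reg_r ((a + e) * (a + e) + b * b)). nra.
  unfold Rdiv. rewrite Rmult_assoc, Rinv_l by nra. nra.
Qed.

Lemma frac_le x y x' y' : 0 <= x -> 0 < y -> 0 < y' -> x * y' <= x' * y -> x / y <= x' / y'.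
Proof.
  intros. apply (Rmult_le_reg_r y); auto. unfold Rdiv.
  rewrite Rmult_assoc, Rinv_l by lra. rewrite Rmult_1_r.
  apply (Rmult_le_reg_r y'); auto.
  replace (x' * / y' * y * y') with (x' * y) by (field; lra). lra.
Qed.

Definition Gd (L : Complex.C) (e : R) (z : Complex.C) : Complex.C :=
  Copp (Cdiv (Cmult (RtoC e) L) (Cmult (Aof L e z) (Aof L e z))).

Lemma Gd_bound L e z : Cmod L = 1 -> Cmod z < 1 -> 0 < e <= 1 ->
  Cmod (Gd L e z) <= / ((1 - Cmod z) * (1 - Cmod z)).
Proof.
  intros HL Hz He. pose proof (U_re L z HL). pose proof (A_mod L e z).
  assert (Aof L e z <> RtoC 0) by (apply A_nz; lra).
  unfold Gd. rewrite Cmod_opp, Cmod_div, !Cmod_mult, HL, Cmod_RtoC_pos by (try lra; apply Cmult_neq_0; auto).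
  rewrite <- (Rmult_1_l (/ _)). apply frac_le; try nra. assert (0 <= 1 - Cmod z <= Cmod (Aof L e z)) by lra. pose proof (Rmult_le_compat _ _ _ _ (proj1 H2) (proj1 H2) (proj2 H2) (proj2 H2)). nra.
Qed.

Lemma rem_bound L e z h : Cmod L = 1 -> Cmod z < 1 -> 0 < e <= 1 ->
  Cmod h <= (1 - Cmod z) / 2 ->
  Cmod (Cminus (Cminus (G L e (Cplus z h)) (G L e z)) (Cmult (Gd L e z) h))
    <= 2 * (Cmod h * Cmod h) / ((1 - Cmod z) * (1 - Cmod z) * (1 - Cmod z)).
Proof.
  intros HL Hz He Hh. pose proof (U_re L z HL). pose proof (A_mod L e z).
  pose proof (U_re L (Cplus z h) HL). pose proof (A_mod L e (Cplus z h)).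
  pose proof (Cmod_triangle z h). pose proof (Cmod_ge_0 h).
  assert (HA : Aof L e z <> RtoC 0) by (apply A_nz; lra).
  assert (HB : Aof L e (Cplus z h) <> RtoC 0) by (apply A_nz; lra).
  replace (Cminus (Cminus (G L e (Cplus z h)) (G L e z)) (Cmult (Gd L e z) h)) with
    (Copp (Cdiv (Cmult (RtoC e) (Cmult (Cmult L h) (Cmult L h)))
       (Cmult (Cmult (Aof L e z) (Aof L e z)) (Aof L e (Cplus z h))))).
  2: { revert HA HB. unfold G, Gd, Aof, U. intros HA HB. field. auto. }
  rewrite Cmod_opp, Cmod_div, !Cmod_mult, HL, Cmod_RtoC_pos by (try lra; repeat apply Cmult_neq_0; auto).
  remember (1 - Cmod z) as r eqn:Er. remember (Cmod (Aof L e z)) as a eqn:Ea. remember (Cmod (Aof L e (Cplus z h))) as b eqn:Eb.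
  assert (Hr : 0 < r) by lra. assert (Ha : r <= a) by lra. assert (Hb : r / 2 <= b) by lra.
  assert (Hrr : r * r * (r/2) <= a * a * b).
  { apply Rmult_le_compat; try nra. }
  assert (Hhh : 0 <= Cmod h * Cmod h) by nra.
  apply frac_le; [nra | apply Rmult_lt_0_compat; [apply Rmult_lt_0_compat|]; lra | apply Rmult_lt_0_compat; [apply Rmult_lt_0_compat|]; lra |].
  replace (e * (1 * Cmod h * (1 * Cmod h)) * (r * r * r)) with (e * (Cmod h * Cmod h) * (2 * (r*r*(r/2)))) by field.
  apply Rle_trans with (1 * (Cmod h * Cmod h) * (2 * (r*r*(r/2)))).
  apply Rmult_le_compat_r. nra. apply Rmult_le_compat_r; lra.
  rewrite Rmult_1_l. replace (2 * (Cmod h * Cmod h) * (a * a * b)) with ((Cmod h * Cmod h) * (2 * (a*a*b))) by ring.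
  apply Rmult_le_compat_l; lra.
Qed.

Lemma diff_bound L e z w : Cmod L = 1 -> 0 <= fst (U L z) -> 0 <= fst (U L w) -> 0 < e ->
  Cmod (Cminus (G L e w) (G L e z)) <= Cmod (Cminus w z) / e.
Proof.
  intros HL Hz Hw He. pose proof (A_mod L e z). pose proof (A_mod L e w).
  assert (HA : Aof L e z <> RtoC 0) by (apply A_nz; lra).
  assert (HB : Aof L e w <> RtoC 0) by (apply A_nz; lra).
  replace (Cminus (G L e w) (G L e z)) with
    (Copp (Cdiv (Cmult (RtoC e) (Cmult L (Cminus w z))) (Cmult (Aof L e w) (Aof L e z)))).
  2: { revert HA HB. unfold G, Aof, U. intros HA HB. field. auto. }
  rewrite Cmod_opp, Cmod_div, !Cmod_mult, HL, Cmod_RtoC_pos by (try lra; repeat apply Cmult_neq_0; auto).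
  pose proof (Cmod_ge_0 (Cminus w z)).
  assert (e <= Cmod (Aof L e w)) by lra. assert (e <= Cmod (Aof L e z)) by lra.
  assert (e * e <= Cmod (Aof L e w) * Cmod (Aof L e z)) by (apply Rmult_le_compat; lra).
  apply frac_le; [nra | apply Rmult_lt_0_compat; lra | lra |].
  replace (e * (1 * Cmod (Cminus w z)) * e) with (Cmod (Cminus w z) * (e * e)) by ring.
  apply Rmult_le_compat_l; lra.
Qed.

Lemma exs_scal (B : R) (c : nat -> R) : ex_series c -> ex_series (fun k => B * c k).
Proof. intros H. apply (ex_series_scal_l B c H). Qed.

Lemma exs_le (a b : nat -> R) : (forall k, Rabs (a k) <= b k) -> ex_series b -> ex_series a.
Proof. intros H Hb. apply (ex_series_le (V := R_CompleteNormedModule) a b); auto. Qed.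

Lemma SB (c a : nat -> R) (B : R) : ex_series c -> (forall k, Rabs (a k) <= B * c k) ->
  ex_series a /\ Rabs (Series a) <= B * Series c.
Proof.
  intros Hc H.
  assert (Ha : ex_series (fun k => Rabs (a k))).
  { apply (exs_le _ (fun k => B * c k)). intros; rewrite Rabs_Rabsolu; auto. apply exs_scal; auto. }
  split. apply ex_series_Rabs; auto.
  eapply Rle_trans. apply Series_Rabs; auto.
  rewrite <- Series_scal_l. apply Series_le. intros; split; auto. apply Rabs_pos.
  apply exs_scal; auto.
Qed.

Lemma Series_zero (a : nat -> R) : (forall k, a k = 0) -> Series a = 0.
Proof.
  intros H. rewrite (Series_ext a (fun k => 0 * a k)). rewrite Series_scal_l. ring.
  intros; rewrite H; ring.
Qed.

Lemma Series_ge_term (a : nat -> R) n : ex_series a -> (forall k, 0 <= a k) -> a n <= Series a.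
Proof.
  intros Ha Hp. rewrite (Series_incr_n a (S n)) by (auto; lia). simpl pred.
  assert (0 <= Series (fun k => a (S n + k)%nat)).
  { rewrite <- (Series_zero (fun _ => 0)) by auto. apply Series_le. intros; split; auto. lra.
    apply (ex_series_incr_n a (S n)) in Ha. auto. }
  destruct n. simpl in *. lra.
  simpl in *. pose proof (cond_pos_sum a n (fun k => Hp k)). lra.
Qed.

Definition geo (K : R) (k : nat) := K * (/2) ^ k.

Lemma geo_ex K : ex_series (geo K).
Proof. apply exs_scal. apply ex_series_geom. rewrite Rabs_right; lra. Qed.

Lemma geo_sum K : Series (geo K) = 2 * K.
Proof. unfold geo. rewrite Series_scal_l, Series_geom. field. rewrite Rabs_right; lra. Qed.

Lemma geo_nonneg K k : 0 <= K -> 0 <= geo K k.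
Proof. intros. unfold geo. apply Rmult_le_pos; auto. apply pow_le; lra. Qed.

Lemma geo_tail K N : Series (fun k => geo K (N + k)%nat) = geo K N * 2.
Proof.
  rewrite (Series_ext _ (fun k => geo K N * (/2)^k)). rewrite Series_scal_l, Series_geom. field.
  rewrite Rabs_right; lra. intros; unfold geo; rewrite pow_add; ring.
Qed.

Lemma geo_small K eps : 0 < eps -> exists N, (0 < N)%nat /\ geo K N < eps.
Proof.
  intros He. destruct (pow_lt_1_zero (/2) ltac:(rewrite Rabs_right; lra) (eps / (Rabs K + 1)))
    as [N HN]. apply Rdiv_lt_0_compat; auto. pose proof (Rabs_pos K); lra.
  exists (S N). split. lia. specialize (HN (S N) ltac:(lia)).
  unfold geo. pose proof (Rabs_pos K).
  rewrite Rabs_right in HN by (apply Rle_ge, pow_le; lra).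
  assert (0 <= (/2)^(S N)) by (apply pow_le; lra).
  apply Rle_lt_trans with ((Rabs K + 1) * (/2)^(S N)).
  { apply Rmult_le_compat_r; auto. pose proof (Rle_abs K); lra. }
  replace eps with ((Rabs K + 1) * (eps / (Rabs K + 1))) by (field; lra).
  apply Rmult_lt_compat_l; lra.
Qed.

Lemma CT (K : R) (e : nat -> R) : 0 < K -> (forall k, 0 < e k) -> forall eps, 0 < eps ->
  exists delta, 0 < delta /\ forall d, 0 <= d < delta -> forall a : nat -> R,
    (forall k, Rabs (a k) <= 2 * geo K k) -> (forall k, Rabs (a k) <= geo K k * (d / e k)) ->
    ex_series a /\ Rabs (Series a) <= eps.
Proof.
  intros HK He eps Heps.
  destruct (geo_small K (eps / 8)) as [N [HN0 HN]]. lra.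
  set (S := sum_f_R0 (fun k => geo K k / e k) (pred N)).
  assert (HS : 0 <= S).
  { apply cond_pos_sum. intros k. unfold Rdiv. apply Rmult_le_pos. apply geo_nonneg; lra.
    left; apply Rinv_0_lt_compat; auto. }
  exists (eps / (2 * (S + 1))). split. apply Rdiv_lt_0_compat; lra.
  intros d Hd a H1 H2.
  assert (Hex2 : ex_series (fun k => 2 * geo K k)) by (apply exs_scal, geo_ex).
  assert (Hea : ex_series (fun k => Rabs (a k))).
  { apply (exs_le _ _ (fun k => ltac:(rewrite Rabs_Rabsolu; apply H1))). auto. }
  split. apply ex_series_Rabs; auto.
  eapply Rle_trans. apply Series_Rabs; auto.
  rewrite (Series_incr_n _ N) by auto.
  assert (Hsum : sum_f_R0 (fun k => Rabs (a k)) (pred N) <= d * S).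
  { unfold S. rewrite scal_sum. apply sum_Rle. intros k _.
    specialize (H2 k). unfold Rdiv in *. lra. }
  assert (HdS : d * S <= eps / 2).
  { apply Rle_trans with (eps / (2 * (S + 1)) * S). apply Rmult_le_compat_r; lra.
    apply (Rmult_le_reg_r (2 * (S+1))). lra.
    replace (eps / (2 * (S + 1)) * S * (2 * (S + 1))) with (eps * S) by (field; lra).
    replace (eps / 2 * (2 * (S + 1))) with (eps * S + eps) by (field; lra). lra. }
  assert (Htail : Series (fun k => Rabs (a (N + k)%nat)) <= eps / 2).
  { apply Rle_trans with (Series (fun k => 2 * geo K (N + k)%nat)).
    apply Series_le. intros; split. apply Rabs_pos. apply H1.
    apply exs_scal. apply (ex_series_incr_n (geo K) N). apply geo_ex.
    rewrite Series_scal_l, geo_tail. lra. }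
  lra.
Qed.

Lemma trig_Z (x : R) (k : Z) : cos (x + 2 * IZR k * PI) = cos x /\ sin (x + 2 * IZR k * PI) = sin x.
Proof.
  destruct k as [|p|p].
  - simpl. replace (x + 2 * 0 * PI) with x by ring. auto.
  - replace (IZR (Zpos p)) with (INR (Pos.to_nat p)) by (rewrite INR_IZR_INZ, positive_nat_Z; auto). split; [apply cos_period | apply sin_period].
  - rewrite IZR_NEG. replace (IZR (Zpos p)) with (INR (Pos.to_nat p)) by (rewrite INR_IZR_INZ, positive_nat_Z; auto).
    set (y := x + 2 * - INR (Pos.to_nat p) * PI).
    assert (Ex : x = y + 2 * INR (Pos.to_nat p) * PI) by (unfold y; ring).
    split; [rewrite Ex at 1; rewrite cos_period | rewrite Ex at 1; rewrite sin_period]; auto.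
Qed.

Lemma radius (g : R -> R) (t0 eta : R) :
  (forall t k, g (t + 2 * IZR k * PI) = g t) ->
  continuity_pt g t0 -> g t0 = 0 -> 0 < eta ->
  exists r, 0 < r <= 1 /\ forall t, 2 - 2 * cos (t - t0) < r * r -> g t < eta.
Proof.
  intros Hper Hc H0 Heta.
  destruct (Hc eta Heta) as [del [Hdel Hd]].
  set (d := Rmin del PI).
  assert (Hd0 : 0 < d) by (unfold d; apply Rmin_glb_lt; [lra | apply PI_RGT_0]).
  assert (HdPI : d <= PI) by apply Rmin_r.
  assert (Hdd : d <= del) by apply Rmin_l.
  assert (Hcd : cos d < 1) by (rewrite <- cos_0; apply cos_decreasing_1; lra).
  exists (Rmin 1 (sqrt (2 - 2 * cos d))). split. split.
  apply Rmin_glb_lt. lra. apply sqrt_lt_R0. lra. apply Rmin_l.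
  intros t Ht.
  assert (Hsq : 2 - 2 * cos (t - t0) < 2 - 2 * cos d).
  { assert (0 <= Rmin 1 (sqrt (2 - 2 * cos d)) <= sqrt (2 - 2 * cos d)).
    { split. left; apply Rmin_glb_lt. lra. apply sqrt_lt_R0. lra. apply Rmin_r. }
    rewrite <- (sqrt_sqrt (2 - 2 * cos d)) by lra. 
    assert (Rmin 1 (sqrt (2 - 2 * cos d)) * Rmin 1 (sqrt (2 - 2 * cos d)) <= sqrt (2 - 2 * cos d) * sqrt (2 - 2 * cos d))
      by (apply Rmult_le_compat; lra). lra. }
  set (s := t - t0). change (t - t0) with s in Hsq.
  set (k := up ((s - PI) / (2 * PI))).
  destruct (archimed ((s - PI) / (2 * PI))) as [A1 A2]. fold k in A1, A2.
  pose proof PI_RGT_0.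
  assert (Hk1 : s - PI < 2 * PI * IZR k).
  { apply (Rmult_lt_reg_r (/ (2 * PI))). apply Rinv_0_lt_compat; lra.
    replace (2 * PI * IZR k * / (2 * PI)) with (IZR k) by (field; lra). unfold Rdiv in A1. lra. }
  assert (Hk2 : 2 * PI * IZR k <= s + PI).
  { apply (Rmult_le_reg_r (/ (2 * PI))). apply Rinv_0_lt_compat; lra.
    replace (2 * PI * IZR k * / (2 * PI)) with (IZR k) by (field; lra).
    replace ((s + PI) * / (2 * PI)) with ((s - PI) / (2 * PI) + 1) by (field; lra). lra. }
  set (s' := s + 2 * IZR (- k) * PI).
  assert (Hs' : - PI <= s' <= PI) by (unfold s'; rewrite opp_IZR; lra).
  assert (Hcs : cos s' = cos s) by (apply trig_Z).
  assert (Hlt : Rabs s' < d).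
  { destruct (Rle_lt_dec 0 s') as [Hp | Hn].
    - rewrite Rabs_right by lra. apply cos_decreasing_0; lra.
    - rewrite Rabs_left by lra. apply cos_decreasing_0; try lra. rewrite cos_neg. lra. }
  assert (Hgt : g t = g (t0 + s')).
  { replace (t0 + s') with (t + 2 * IZR (- k) * PI) by (unfold s', s; ring). rewrite Hper. auto. }
  rewrite Hgt. destruct (Req_dec s' 0) as [E0 | Ene].
  { rewrite E0, Rplus_0_r, H0. lra. }
  specialize (Hd (t0 + s')). simpl in Hd. unfold R_dist in Hd. rewrite H0 in Hd.
  assert (Rabs (g (t0 + s') - 0) < eta).
  { apply Hd. split. unfold D_x, no_cond. split; auto. intro E. apply Ene. lra.
    replace (t0 + s' - t0) with s' by ring. lra. }
  pose proof (Rle_abs (g (t0 + s') - 0)). lra.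
Qed.

Lemma Im_le_Cmod (x : Complex.C) : Rabs (snd x) <= Cmod x.
Proof.
  unfold Cmod. rewrite <- sqrt_Rsqr_abs. apply sqrt_le_1_alt. unfold Rsqr. simpl. nra.
Qed.

Lemma Fst_le_Cmod (x : Complex.C) : Rabs (fst x) <= Cmod x.
Proof. apply (re_le_Cmod x). Qed.

Lemma Cnorm_Cmod (z : Cpx) : Cnorm z = Cmod z.
Proof. unfold Cnorm, Cmod. f_equal. simpl. ring. Qed.

Lemma exs_minus (a b : nat -> R) : ex_series a -> ex_series b -> ex_series (fun n => a n - b n).
Proof. intros Ha Hb. exact (ex_series_minus (V := R_NormedModule) a b Ha Hb). Qed.

Lemma ser_bound (c : nat -> R) (a : nat -> Complex.C) (B : R) :
  ex_series c -> (forall k, 0 <= c k) -> (forall k, Cmod (a k) <= B) ->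
  (ex_series (fun k => c k * fst (a k)) /\ Rabs (Series (fun k => c k * fst (a k))) <= B * Series c) /\
  (ex_series (fun k => c k * snd (a k)) /\ Rabs (Series (fun k => c k * snd (a k))) <= B * Series c).
Proof.
  intros Hc Hp H. split; apply SB; auto; intros k; rewrite Rabs_mult, Rabs_right by (apply Rle_ge; auto);
  rewrite Rmult_comm; apply Rmult_le_compat_r; auto; eapply Rle_trans; [apply Fst_le_Cmod | auto | apply Im_le_Cmod | auto].
Qed.

Lemma U_expi L t0 t : L = (cos t0, - sin t0) ->
  fst (U L (cos t, sin t)) = 1 - cos (t - t0) /\
  Cmod (U L (cos t, sin t)) * Cmod (U L (cos t, sin t)) = 2 - 2 * cos (t - t0).
Proof.
  intros ->. rewrite Cmod_sq. rewrite cos_minus. simpl.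
  pose proof (sin2_cos2 t). pose proof (sin2_cos2 t0). unfold Rsqr in *. split. ring.
  nra.
Qed.

Lemma ser_diff (c : nat -> R) (a b : nat -> Complex.C) :
  ex_series (fun k => c k * fst (a k)) -> ex_series (fun k => c k * fst (b k)) ->
  ex_series (fun k => c k * snd (a k)) -> ex_series (fun k => c k * snd (b k)) ->
  Series (fun k => c k * fst (a k)) - Series (fun k => c k * fst (b k)) =
    Series (fun k => c k * fst (Cminus (a k) (b k))) /\
  Series (fun k => c k * snd (a k)) - Series (fun k => c k * snd (b k)) =
    Series (fun k => c k * snd (Cminus (a k) (b k))).
Proof.
  intros H1 H2 H3 H4. split; rewrite <- Series_minus by auto; apply Series_ext; intros;
  unfold Cminus, Cplus, Copp; cbn [fst snd]; ring.
Qed.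

Lemma ser_rem (c : nat -> R) (a b d : nat -> Complex.C) (h : Complex.C) :
  ex_series (fun k => c k * fst (a k)) -> ex_series (fun k => c k * fst (b k)) ->
  ex_series (fun k => c k * snd (a k)) -> ex_series (fun k => c k * snd (b k)) ->
  ex_series (fun k => c k * fst (d k)) -> ex_series (fun k => c k * snd (d k)) ->
  Series (fun k => c k * fst (a k)) - Series (fun k => c k * fst (b k)) -
    (Series (fun k => c k * fst (d k)) * fst h - Series (fun k => c k * snd (d k)) * snd h) =
    Series (fun k => c k * fst (Cminus (Cminus (a k) (b k)) (Cmult (d k) h))) /\
  Series (fun k => c k * snd (a k)) - Series (fun k => c k * snd (b k)) -
    (Series (fun k => c k * fst (d k)) * snd h + Series (fun k => c k * snd (d k)) * fst h) =
    Series (fun k => c k * snd (Cminus (Cminus (a k) (b k)) (Cmult (d k) h))).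
Proof.
  intros Ha1 Hb1 Ha2 Hb2 Hd1 Hd2. split.
  - rewrite (Series_ext (fun k => c k * fst (Cminus (Cminus (a k) (b k)) (Cmult (d k) h))) (fun k => (c k * fst (a k) - c k * fst (b k)) -
       (c k * fst (d k) * fst h - c k * snd (d k) * snd h)))
      by (intros; unfold Cminus, Cplus, Copp, Cmult; cbn [fst snd]; ring).
    rewrite (Series_minus (fun k => c k * fst (a k) - c k * fst (b k))
                          (fun k => c k * fst (d k) * fst h - c k * snd (d k) * snd h)).
    rewrite (Series_minus (fun k => c k * fst (a k)) (fun k => c k * fst (b k))) by auto.
    rewrite (Series_minus (fun k => c k * fst (d k) * fst h) (fun k => c k * snd (d k) * snd h)).
    rewrite !Series_scal_r. ring.
    apply ex_series_scal_r; auto. apply ex_series_scal_r; auto.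
    apply exs_minus; auto. apply exs_minus; apply ex_series_scal_r; auto.
  - rewrite (Series_ext (fun k => c k * snd (Cminus (Cminus (a k) (b k)) (Cmult (d k) h))) (fun k => (c k * snd (a k) - c k * snd (b k)) -
       (c k * fst (d k) * snd h - - (c k * snd (d k) * fst h))))
      by (intros; unfold Cminus, Cplus, Copp, Cmult; cbn [fst snd]; ring).
    rewrite (Series_minus (fun k => c k * snd (a k) - c k * snd (b k))
                          (fun k => c k * fst (d k) * snd h - - (c k * snd (d k) * fst h))).
    rewrite (Series_minus (fun k => c k * snd (a k)) (fun k => c k * snd (b k))) by auto.
    rewrite (Series_minus (fun k => c k * fst (d k) * snd h) (fun k => - (c k * snd (d k) * fst h))).
    rewrite (Series_ext (fun k => - (c k * snd (d k) * fst h)) (fun k => (c k * snd (d k)) * (- fst h))) by (intros; ring).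
    rewrite !Series_scal_r. ring.
    apply ex_series_scal_r; auto.
    apply (ex_series_ext (fun k => (c k * snd (d k)) * (- fst h))). intros; simpl; ring. apply ex_series_scal_r; auto.
    apply exs_minus; auto. apply exs_minus. apply ex_series_scal_r; auto.
    apply (ex_series_ext (fun k => (c k * snd (d k)) * (- fst h))). intros; simpl; ring. apply ex_series_scal_r; auto.
Qed.

Theorem mainTheorem14 (a b t0 : R) (v : Cpx -> R)
  (Hab : a < b) (Hlen : b <= a + 2 * PI) (Ht0 : a < t0 < b)
  (Hnonneg : forall t : R, 0 <= v (expi t))
  (Hbdd : exists M : R, forall t : R, v (expi t) <= M)
  (Hcont : forall t : R, a < t < b -> continuity_pt (fun s => v (expi s)) t)
  (HC1 : exists v' : R -> R, forall t : R, a < t < b -> t <> t0 ->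
      derivable_pt_lim (fun s => v (expi s)) t (v' t) /\ continuity_pt v' t)
  (Hzero : v (expi t0) = 0) :
  exists f : Cpx -> Cpx,
    analytic_on_disk f /\ continuous_on_closed_disk f /\
    f (expi t0) = C0 /\
    forall t : R, Cnorm (f (expi t)) >= v (expi t).
Proof.
  destruct Hbdd as [M HM].
  set (M1 := Rabs M + 1).
  assert (HM1 : 0 < M1) by (unfold M1; pose proof (Rabs_pos M); lra).
  assert (HvM : forall t, v (expi t) <= M1) by (intros t; pose proof (HM t); pose proof (Rle_abs M); unfold M1; lra).
  set (g := fun s => v (expi s)).
  assert (Hper : forall t k, g (t + 2 * IZR k * PI) = g t).
  { intros t k. unfold g, expi. destruct (trig_Z t k) as [E1 E2]. rewrite E1, E2. auto. }
  assert (Hex : forall k : nat, exists r, 0 < r <= 1 /\ forall t, 2 - 2 * cos (t - t0) < r * r -> g t < M1 * (/2) ^ k).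
  { intros k. apply (radius g t0); [exact Hper | apply Hcont; auto | exact Hzero | apply Rmult_lt_0_compat; auto; apply pow_lt; lra]. }
  set (e := fun k => proj1_sig (constructive_indefinite_description _ (Hex k))).
  assert (He : forall k, 0 < e k <= 1 /\ forall t, 2 - 2 * cos (t - t0) < e k * e k -> g t < M1 * (/2) ^ k).
  { intros k. unfold e. destruct (constructive_indefinite_description _ (Hex k)) as [r Hr]. simpl. auto. }
  set (L := (cos t0, - sin t0) : Complex.C).
  assert (HL : Cmod L = 1).
  { unfold Cmod, L. simpl. pose proof (sin2_cos2 t0). unfold Rsqr in H.
    replace (cos t0 * (cos t0 * 1) + - sin t0 * (- sin t0 * 1)) with 1 by lra. apply sqrt_1. }
  set (c := geo (8 * M1)).
  assert (Hc : ex_series c) by apply geo_ex.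
  assert (Hcp : forall k, 0 <= c k) by (intros; apply geo_nonneg; lra).
  assert (Hsc : Series c = 16 * M1) by (unfold c; rewrite geo_sum; ring).
  set (F1 := fun z : Complex.C => Series (fun k => c k * fst (G L (e k) z))).
  set (F2 := fun z : Complex.C => Series (fun k => c k * snd (G L (e k) z))).
  exists (fun z => (F1 z, F2 z)).
  split; [| split; [| split]].
  -
    intros z Hz. rewrite Cnorm_Cmod in Hz.
    remember (1 - Cmod z) as r eqn:Er.
    assert (Hr : 0 < r) by lra.
    assert (He0 : forall k, 0 < e k <= 1) by (intros k; apply He).
    destruct (ser_bound c (fun k => Gd L (e k) z) (/ (r * r)) Hc Hcp) as [[Hd1 _] [Hd2 _]].
    { intros k. rewrite Er. apply Gd_bound; auto. }
    exists (Series (fun k => c k * fst (Gd L (e k) z)), Series (fun k => c k * snd (Gd L (e k) z))).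
    intros eps Heps.
    set (K := 64 * M1).
    assert (HK : 0 < K) by (unfold K; lra).
    exists (Rmin (r / 2) (eps * (r * r * r) / K)). split.
    { apply Rmin_glb_lt. lra. apply Rdiv_lt_0_compat; auto. apply Rmult_lt_0_compat; auto.
      apply Rmult_lt_0_compat; auto. apply Rmult_lt_0_compat; auto. }
    intros h [Hh0 Hh]. rewrite Cnorm_Cmod in Hh0, Hh.
    assert (Hh1 : Cmod h <= r / 2) by (pose proof (Rmin_l (r/2) (eps * (r * r * r) / K)); lra).
    assert (Hh2 : Cmod h <= eps * (r * r * r) / K) by (pose proof (Rmin_r (r/2) (eps * (r * r * r) / K)); lra).
    assert (HUz : 0 <= fst (U L z)) by (pose proof (U_re L z HL); lra).
    assert (HUzh : 0 <= fst (U L (Cplus z h))).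
    { pose proof (U_re L (Cplus z h) HL). pose proof (Cmod_triangle z h). lra. }
    destruct (ser_bound c (fun k => G L (e k) z) 1 Hc Hcp) as [[Hz1 _] [Hz2 _]].
    { intros k. apply G_bound; auto; apply He. }
    destruct (ser_bound c (fun k => G L (e k) (Cplus z h)) 1 Hc Hcp) as [[Hw1 _] [Hw2 _]].
    { intros k. apply G_bound; auto; apply He. }
    destruct (ser_rem c (fun k => G L (e k) (Cplus z h)) (fun k => G L (e k) z) (fun k => Gd L (e k) z) h
      Hw1 Hz1 Hw2 Hz2 Hd1 Hd2) as [E1 E2].
    destruct (ser_bound c (fun k => Cminus (Cminus (G L (e k) (Cplus z h)) (G L (e k) z)) (Cmult (Gd L (e k) z) h))
       (2 * (Cmod h * Cmod h) / (r * r * r)) Hc Hcp) as [[_ B1] [_ B2]].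
    { intros k. rewrite Er. apply rem_bound; auto. lra. }
    rewrite (Cnorm_Cmod h), Cnorm_Cmod. eapply Rle_trans. apply Cmod_le_abs.
    change (Cadd z h) with (Cplus z h).
    cbn [Csub Cmul fst snd]. unfold F1, F2. rewrite E1, E2.
    rewrite Hsc in B1, B2.
    assert (Hfin : 2 * (Cmod h * Cmod h) / (r * r * r) * (16 * M1) * 2 <= eps * Cmod h).
    { pose proof (Cmod_ge_0 h).
      replace (2 * (Cmod h * Cmod h) / (r * r * r) * (16 * M1) * 2) with (Cmod h * (Cmod h * K / (r * r * r)))
        by (unfold K; field; lra).
      rewrite (Rmult_comm eps). apply Rmult_le_compat_l; auto.
      assert (0 < r * r * r) by (apply Rmult_lt_0_compat; auto; apply Rmult_lt_0_compat; auto).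
      apply (Rmult_le_reg_r (r * r * r / K)). apply Rdiv_lt_0_compat; auto.
      replace (Cmod h * K / (r * r * r) * (r * r * r / K)) with (Cmod h) by (field; lra).
      replace (eps * (r * r * r / K)) with (eps * (r * r * r) / K) by (field; lra). auto. }
    lra.
  -
    intros z Hz eps Heps. rewrite Cnorm_Cmod in Hz.
    assert (He0 : forall k, 0 < e k) by (intros k; apply He).
    destruct (CT (8 * M1) e ltac:(lra) He0 (eps / 3) ltac:(lra)) as [del [Hdel HCT]].
    exists del. split; auto. intros w Hw Hwz. rewrite Cnorm_Cmod in Hw, Hwz.
    change (Csub w z) with (Cminus w z) in Hwz.
    assert (HUz : 0 <= fst (U L z)) by (pose proof (U_re L z HL); lra).
    assert (HUw : 0 <= fst (U L w)) by (pose proof (U_re L w HL); lra).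
    destruct (ser_bound c (fun k => G L (e k) z) 1 Hc Hcp) as [[Hz1 _] [Hz2 _]].
    { intros k. apply G_bound; auto; apply He. }
    destruct (ser_bound c (fun k => G L (e k) w) 1 Hc Hcp) as [[Hw1 _] [Hw2 _]].
    { intros k. apply G_bound; auto; apply He. }
    destruct (ser_diff c (fun k => G L (e k) w) (fun k => G L (e k) z) Hw1 Hz1 Hw2 Hz2) as [E1 E2].
    assert (HD : forall k, Cmod (Cminus (G L (e k) w) (G L (e k) z)) <= 2 /\ Cmod (Cminus (G L (e k) w) (G L (e k) z)) <= Cmod (Cminus w z) / e k).
    { intros k. split.
      - unfold Cminus. eapply Rle_trans. apply Cmod_triangle. rewrite Cmod_opp.
        pose proof (G_bound L (e k) w HUw (He0 k)). pose proof (G_bound L (e k) z HUz (He0 k)). lra.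
      - apply diff_bound; auto. }
    assert (Hd0 : 0 <= Cmod (Cminus w z) < del) by (split; auto; apply Cmod_ge_0).
    destruct (HCT _ Hd0 (fun k => c k * fst (Cminus (G L (e k) w) (G L (e k) z)))) as [_ B1].
    { intros k. rewrite Rabs_mult, Rabs_right by (apply Rle_ge; auto). rewrite (Rmult_comm 2).
      apply Rmult_le_compat_l; auto. eapply Rle_trans. apply Fst_le_Cmod. apply HD. }
    { intros k. rewrite Rabs_mult, Rabs_right by (apply Rle_ge; auto).
      apply Rmult_le_compat_l; auto. eapply Rle_trans. apply Fst_le_Cmod. apply HD. }
    destruct (HCT _ Hd0 (fun k => c k * snd (Cminus (G L (e k) w) (G L (e k) z)))) as [_ B2].
    { intros k. rewrite Rabs_mult, Rabs_right by (apply Rle_ge; auto). rewrite (Rmult_comm 2).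
      apply Rmult_le_compat_l; auto. eapply Rle_trans. apply Im_le_Cmod. apply HD. }
    { intros k. rewrite Rabs_mult, Rabs_right by (apply Rle_ge; auto).
      apply Rmult_le_compat_l; auto. eapply Rle_trans. apply Im_le_Cmod. apply HD. }
    rewrite Cnorm_Cmod. eapply Rle_lt_trans. apply Cmod_le_abs.
    cbn [Csub fst snd]. unfold F1, F2. rewrite E1, E2. lra.
  -
    assert (HU0 : U L (expi t0) = (0, 0)).
    { unfold U, L, expi, Cminus, Cplus, Copp, Cmult, RtoC. simpl. pose proof (sin2_cos2 t0). unfold Rsqr in H.
      f_equal; lra. }
    assert (HG0 : forall k, fst (G L (e k) (expi t0)) = 0 /\ snd (G L (e k) (expi t0)) = 0).
    { intros k. unfold G, Cdiv. rewrite HU0. simpl. split; ring. }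
    unfold F1, F2, C0. f_equal; apply Series_zero; intros k; rewrite (proj1 (HG0 k)) || rewrite (proj2 (HG0 k)); ring.
  -
    intros t. rewrite Cnorm_Cmod. apply Rle_ge.
    apply Rle_trans with (F1 (expi t)); [| apply (Re_le_Cmod (F1 (expi t), F2 (expi t)))].
    destruct (U_expi L t0 t eq_refl) as [Hre Hmod].
    change (cos t, sin t) with (expi t) in Hre, Hmod.
    pose proof (COS_bound (t - t0)) as Hcb.
    assert (HU : 0 <= fst (U L (expi t))) by lra.
    assert (Hexs : ex_series (fun k => c k * fst (G L (e k) (expi t)))).
    { apply (ser_bound c (fun k => G L (e k) (expi t)) 1); auto. intros k. apply G_bound; auto; apply He. }
    assert (Hterm : forall k, 0 <= c k * fst (G L (e k) (expi t))).
    { intros k. apply Rmult_le_pos; auto. apply G_re_nonneg; auto. apply He. }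
    assert (Hbig : forall k, e k * e k <= 2 - 2 * cos (t - t0) -> c k * / 4 <= F1 (expi t)).
    { intros k Hk. apply Rle_trans with (c k * fst (G L (e k) (expi t))).
      apply Rmult_le_compat_l; auto. apply G_re_big; auto. apply He.
      pose proof (Cmod_ge_0 (U L (expi t))). destruct (He k) as [[He1 He2] _].
      destruct (Rle_lt_dec (e k) (Cmod (U L (expi t)))) as [Hl | Hl]; auto. nra.
      apply (Series_ge_term _ k Hexs Hterm). }
    assert (HS0 : 0 <= F1 (expi t)) by (eapply Rle_trans; [apply (Hterm O) | apply (Series_ge_term _ O Hexs Hterm)]).
    assert (Claim : forall n, v (expi t) <= M1 * (/2) ^ n \/ v (expi t) <= F1 (expi t)).
    { induction n as [|n IH].
      - left. simpl. rewrite Rmult_1_r. apply HvM.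
      - destruct IH as [IH | IH]; [| right; auto].
        destruct (Rlt_le_dec (2 - 2 * cos (t - t0)) (e (S n) * e (S n))) as [Hl | Hl].
        + left. left. apply ((proj2 (He (S n))) t Hl).
        + right. specialize (Hbig (S n) Hl). unfold c, geo in Hbig. simpl in Hbig. lra. }
    destruct (Rle_lt_dec (v (expi t)) (F1 (expi t))) as [Hok | Hbad]; auto.
    exfalso. destruct (pow_lt_1_zero (/2) ltac:(rewrite Rabs_right; lra) (v (expi t) / M1)) as [N HN].
    apply Rdiv_lt_0_compat; lra.
    specialize (HN N (le_n N)). rewrite Rabs_right in HN by (apply Rle_ge, pow_le; lra).
    assert (M1 * (/2)^N < v (expi t)).
    { apply (Rmult_lt_reg_r (/ M1)). apply Rinv_0_lt_compat; lra.
      replace (M1 * (/ 2) ^ N * / M1) with ((/2)^N) by (field; lra). exact HN. }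
    destruct (Claim N); lra.
Qed.
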